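(* For the system $$u_{1,0}-u_{0,1}-\frac{\alpha-\beta}{1+u_{0,0}v_{1,1}}\,u_{0,0}=0,\qquad v_{1,0}-v_{0,1}+\frac{\alpha-\beta}{1+u_{0,0}v_{1,1}}\,v_{1,1}=0,$$ the pair $$(\rho,\sigma)=\big(\ln|1+u_{-1,0}v_{1,0}|,\ \ \ln|1+u_{-1,0}v_{0,1}|\big)$$ is a conservation law, i.e. $(\mathcal T-1)\rho=(\mathcal S-1)\sigma$ on solutions.
   Context: Unknowns $u,v$ on $\mathbb Z^2$, $u_{i,j}=u(n+i,m+j)$, similarly $v$; $\alpha\neq\beta$ constants. Shifts $\mathcal S:n\mapsto n+1$, $\mathcal T:m\mapsto m+1$, acting by $\mathcal S^k\mathcal T^\ell(f_{i,j})=f_{i+k,j+\ell}$. A conservation law is a pair $(\rho,\sigma)$ of functions of finitely many shifts of $(u,v)$ with $(\mathcal T-1)\rho=(\mathcal S-1)\sigma$ holding for all solutions of the system (on which all arguments of logarithms and denominators are nonzero). *)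

(* Defs.v *)
From Stdlib Require Import Reals ZArith.
Open Scope R_scope.

Definition system (alpha beta : R) (u v : Z -> Z -> R) : Prop :=
  forall n m : Z,
    u (n+1)%Z m - u n (m+1)%Z
      - (alpha - beta) / (1 + u n m * v (n+1)%Z (m+1)%Z) * u n m = 0 /\
    v (n+1)%Z m - v n (m+1)%Z
      + (alpha - beta) / (1 + u n m * v (n+1)%Z (m+1)%Z) * v (n+1)%Z (m+1)%Z = 0.

Definition cl_rho (u v : Z -> Z -> R) (n m : Z) : R :=
  ln (Rabs (1 + u (n-1)%Z m * v (n+1)%Z m)).

Definition cl_sigma (u v : Z -> Z -> R) (n m : Z) : R :=
  ln (Rabs (1 + u (n-1)%Z m * v n (m+1)%Z)).

(* Main.v *)
Require Import Defs.
From Stdlib Require Import Reals ZArith Lra Lia.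
Open Scope R_scope.

Lemma ln_abs_mul (a b : R) : a <> 0 -> b <> 0 ->
  ln (Rabs (a*b)) = ln (Rabs a) + ln (Rabs b).
Proof.
  intros. rewrite Rabs_mult. apply ln_mult; apply Rabs_pos_lt; auto.
Qed.

Theorem mainTheorem7 (alpha beta : R) (u v : Z -> Z -> R) :
  alpha <> beta ->
  (forall n m : Z, 1 + u n m * v (n+1)%Z (m+1)%Z <> 0) ->
  (forall n m : Z, 1 + u (n-1)%Z m * v (n+1)%Z m <> 0) ->
  (forall n m : Z, 1 + u (n-1)%Z m * v n (m+1)%Z <> 0) ->
  system alpha beta u v ->
  forall n m : Z,
    cl_rho u v n (m+1)%Z - cl_rho u v n m = cl_sigma u v (n+1)%Z m - cl_sigma u v n m.
Proof.
  intros Hab H1 H2 H3 Hs n m.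
  unfold cl_rho, cl_sigma.
  destruct (Hs (n-1)%Z m) as [E1 _].
  destruct (Hs n m) as [_ E2].
  replace (n-1+1)%Z with n in E1 by lia.
  replace (n+1-1)%Z with n by lia.
  set (x := u (n-1)%Z m) in *. set (y := v (n+1)%Z (m+1)%Z) in *.
  set (p := u n m) in *. set (q := u (n-1)%Z (m+1)%Z) in *.
  set (r := v (n+1)%Z m) in *. set (s := v n (m+1)%Z) in *.
  assert (HC : 1 + p*y <> 0) by apply H1.
  assert (HD : 1 + x*s <> 0) by apply H3.
  assert (HA : 1 + q*y <> 0) by apply H2.
  assert (HB : 1 + x*r <> 0) by apply H2.
  assert (Eq : (1+q*y)*(1+x*s) = (1+x*r)*(1+p*y)).
  { assert (Hq : q = p - (alpha-beta)/(1+x*s)*x) by lra.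
    assert (Hr : r = s - (alpha-beta)/(1+p*y)*y) by lra.
    rewrite Hq, Hr. field. split; auto. }
  assert (L : ln (Rabs ((1+q*y)*(1+x*s))) = ln (Rabs ((1+x*r)*(1+p*y)))) by (rewrite Eq; reflexivity).
  rewrite !ln_abs_mul in L by auto.
  lra.
Qed.
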